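(* Let $p>q>1$ be relatively prime integers and write $p=mq+r$ with $m\in\mathbb{N}$ and $1\le r\le q-1$. Then for every integer $k\ge 1$, the map $T_{\frac{p}{q}}\circ T_{kq}$ has an absolutely continuous invariant probability measure with density $$f_{\frac{p}{q}\circ kq}(x)=\frac{p-r}{p}\left(1+\frac{q}{p-r}\mathbf{1}_{[0,\frac{r}{q})}(x)\right),\qquad x\in[0,1),$$ which in particular does not depend on $k$.
   Context: For a real number $\gamma>1$ let $T_\gamma:[0,1)\to[0,1)$, $T_\gamma(x)=\gamma x \bmod 1$. The density is with respect to Lebesgue measure on $[0,1)$. *)

(* Defs.v *)
From HB Require Import structures.
From mathcomp Require Import all_boot all_order all_algebra.
From mathcomp Require Import all_classical all_reals all_analysis.
Set Implicit Arguments. Unset Strict Implicit. Unset Printing Implicit Defensive.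
Import Order.TTheory GRing.Theory Num.Theory.
Local Open Scope classical_set_scope.
Local Open Scope ring_scope.

Definition Tmap {R : realType} (gamma : R) (x : R) : R :=
  gamma * x - (Num.floor (gamma * x))%:~R.

Definition I01 {R : realType} : set R := `[0%R, 1%R[%classic.

(* f is the density of a T-invariant probability measure on [0,1)
   absolutely continuous w.r.t. Lebesgue measure: f is measurable and
   nonnegative on [0,1), integrates to 1 over [0,1), and the measure
   A |-> \int_A f is T-invariant, i.e. mu(T^{-1} A) = mu(A) for every
   Borel A included in [0,1) (preimage taken inside [0,1)). *)
Definition invariant_density {R : realType} (T : R -> R) (f : R -> R) : Prop :=
  measurable_fun I01 f /\
  (forall x, I01 x -> 0 <= f x) /\
  (\int[lebesgue_measure]_(x in I01) (f x)%:E = 1)%E /\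
  (forall A : set R, measurable A -> A `<=` I01 ->
     (\int[lebesgue_measure]_(x in I01 `&` (T @^-1` A)) (f x)%:E
      = \int[lebesgue_measure]_(x in A) (f x)%:E)%E).

(* Main.v *)
Require Import Defs.
From HB Require Import structures.
From mathcomp Require Import all_boot all_order all_algebra.
From mathcomp Require Import all_classical all_reals all_analysis.
Import Order.TTheory GRing.Theory Num.Theory.
From mathcomp Require Import ring lra zify.
Local Open Scope classical_set_scope.
Local Open Scope ring_scope.

Section S.
Context {R : realType}.
Local Notation mu := (@lebesgue_measure R).

Lemma aff_meas (N j : R) : measurable_fun setT (fun x : R => N * x - j).
Proof.
apply: measurable_realfun.measurable_funB; last exact: measurable_cst.
apply: measurable_realfun.measurable_funM; [exact: measurable_cst| exact: measurable_id].
Qed.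

Lemma scale_meas (N j : R) (E : set R) : 0 < N -> measurable E ->
  (mu E = N%:E * mu ((fun x : R => (N * x - j)%R) @^-1` E))%E.
Proof.
move=> N0 mE.
pose nn := NngNum (ltW N0).
have mg : measurable_fun (setT : set (measurableTypeR R)) (fun x : measurableTypeR R => (N * x - j : measurableTypeR R)) := aff_meas N j.
pose pm := measure_function_pushforward__canonical__measure_function_Measure mu mg.
have := @lebesgue_measure_unique R (measure_function_mscale__canonical__measure_function_Measure nn pm).
move=> /(_ _ E mE) /= -> //.
move=> _ [[a b]] _ <-.
rewrite /mscale /pushforward /=.
rewrite /pushforward.
have -> : (fun x : R => N * x - j) @^-1` `]a, b] = `](a + j) / N, (b + j) / N]%classic.
  apply/seteqP; split => x /=; rewrite !in_itv /= ltr_pdivrMr // ler_pdivlMr //;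
    move=> /andP[h1 h2]; apply/andP; split; lra.
rewrite !lebesgue_measure_itv /= !lte_fin ltr_pM2r ?invr_gt0 // ltrD2r.
case: ifPn => _; last by rewrite mule0.
by rewrite -EFinB -EFinM; congr EFin; field; rewrite gt_eqF.
Qed.

Lemma Tmap_I01 (N x : R) : I01 (Tmap N x).
Proof.
rewrite /I01 /Tmap /= in_itv /=; have /andP[h1 h2] := floor_itv (N * x).
rewrite intrD in h2; apply/andP; split; lra.
Qed.

Lemma Tmap_meas (N : R) : measurable_fun setT (Tmap N).
Proof.
apply: measurable_realfun.measurable_funB.
  apply: measurable_realfun.measurable_funM; [exact: measurable_cst| exact: measurable_id].
rewrite (_ : (fun x : R => _) = (fun y : R => (Num.floor y)%:~R : R) \o (fun x : R => N * x)) //.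
apply: measurableT_comp; last first.
  apply: measurable_realfun.measurable_funM; [exact: measurable_cst| exact: measurable_id].
apply: measurable_realfun.nondecreasing_measurable => // u v uv.
by rewrite ler_int le_floor.
Qed.

Lemma Tmap_branch {N : R} {j : nat} {x : R} : 0 < N ->
  j%:R <= N * x < j%:R + 1 -> Tmap N x = N * x - j%:R.
Proof.
move=> N0 h; rewrite /Tmap (@floor_def _ _ j%:Z) //.
by rewrite intrD.
Qed.

Lemma branch_set (N : R) (j : nat) (E : set R) : 0 < N ->
  `[j%:R / N, (j.+1)%:R / N[%classic `&` Tmap N @^-1` E =
  (fun x : R => N * x - j%:R) @^-1` (E `&` I01).
Proof.
move=> N0; apply/seteqP; split => x /=.
- rewrite in_itv /= ler_pdivrMr // ltr_pdivlMr // => -[/andP[h1 h2] hE].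
  have hb : j%:R <= N * x < j%:R + 1 by rewrite -natr1 in h2; apply/andP; split; lra.
  rewrite -(Tmap_branch N0 hb); split => //; exact: Tmap_I01.
- rewrite /I01 /= !in_itv /= ler_pdivrMr // ltr_pdivlMr // => -[hE /andP[h1 h2]].
  have hb : j%:R <= N * x < j%:R + 1 by apply/andP; split; lra.
  rewrite (Tmap_branch N0 hb); split => //.
  by rewrite -natr1; apply/andP; split; lra.
Qed.

Lemma I01_meas : measurable (I01 : set R).
Proof. exact: measurable_itv. Qed.

Lemma pre_meas (N j : R) (F : set R) : measurable F ->
  measurable ((fun x : R => N * x - j) @^-1` F).
Proof. by move=> mF; have := aff_meas N j measurableT F mF; rewrite setTI. Qed.

Lemma branch_mu (N : R) (j : nat) (E : set R) (e : R) : 0 < N -> measurable E ->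
  mu (E `&` I01) = e%:E ->
  mu (`[j%:R / N, (j.+1)%:R / N[%classic `&` Tmap N @^-1` E) = (e / N)%:E.
Proof.
move=> N0 mE he; rewrite branch_set //.
have := scale_meas N j%:R _ N0 (measurableI _ _ mE I01_meas).
rewrite he => h.
set X := mu _ in h *.
by rewrite mulrC EFinM h muleA -EFinM mulVf ?gt_eqF // mul1e.
Qed.

Lemma count_mu (N : R) (E : set R) (e : R) (n : nat) : 0 < N -> measurable E ->
  mu (E `&` I01) = e%:E ->
  measurable (`[0, n%:R / N[%classic `&` Tmap N @^-1` E) /\ mu (`[0, n%:R / N[%classic `&` Tmap N @^-1` E) = (n%:R / N * e)%:E.
Proof.
move=> N0 mE he; elim: n => [|n [mA hA]].
  rewrite (_ : `[0, 0%:R / N[%classic = set0); first by rewrite set0I measure0 mul0r mul0r.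
  by apply/seteqP; split => x //=; rewrite in_itv /= mul0r; lra.
have h0 : 0 <= n%:R / N by apply: divr_ge0 => //; exact: ltW.
have h1 : n%:R / N <= n.+1%:R / N by rewrite ler_pM2r ?invr_gt0 // ler_nat.
have hU : `[0, n.+1%:R / N[%classic = `[0, n%:R / N[%classic `|` `[n%:R / N, n.+1%:R / N[%classic.
  by apply/seteqP; split => x /=; rewrite !in_itv /=; [move=> /andP[a b]|case=> /andP[a b]];
    [case: (ltrP x (n%:R / N)) => c; [left|right]|..]; apply/andP; split; lra.
have mB : measurable (`[n%:R / N, n.+1%:R / N[%classic `&` Tmap N @^-1` E).
  by rewrite branch_set //; apply: pre_meas; exact: measurableI _ _ mE I01_meas.
rewrite hU setIUl.
have hB := branch_mu N n E e N0 mE he.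
split; first exact: measurableU.
rewrite measureU //; last first.
  apply/seteqP; split => x //= [[a _] [b _]]; move: a b; rewrite !in_itv /=; lra.
have -> : (n.+1%:R / N * e)%:E = ((n%:R / N * e)%:E + (e / N)%:E)%E.
  by rewrite -EFinD; congr EFin; rewrite -natr1; field; rewrite gt_eqF.
by rewrite -hA -hB.
Qed.

Lemma int_step (a b : R) (J D : set R) : 0 <= a -> 0 <= b -> measurable J -> measurable D ->
  (\int[mu]_(x in D) ((a + b * \1_J x)%:E) = a%:E * mu D + b%:E * mu (J `&` D))%E.
Proof.
move=> a0 b0 mJ mD.
have i0 : forall x, (0 <= (\1_J x : R))%R by move=> x; rewrite indicE; case: (_ \in _).
under eq_integral do rewrite EFinD EFinM.
rewrite ge0_integralD //; first rewrite integral_cst // ge0_integralZl_EFin //; first by rewrite integral_indic.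
all: try (by move=> x _; rewrite ?lee_fin -?EFinM ?lee_fin ?mulr_ge0).
all: try exact: measurable_cst.
all: apply/measurable_realfun.measurable_EFinP.
all: try exact: measurable_realfun.measurable_indic.
apply: measurable_realfun.measurable_funM; first exact: measurable_cst.
exact: measurable_realfun.measurable_indic.
Qed.

Lemma scale_inv (N j : R) (F : set R) (b : R) : 0 < N -> measurable F ->
  mu F = b%:E -> mu ((fun x : R => N * x - j) @^-1` F) = (b / N)%:E.
Proof.
move=> N0 mF he.
have := scale_meas N j _ N0 mF.
rewrite he => h.
set X := mu _ in h *.
by rewrite mulrC EFinM h muleA -EFinM mulVf ?gt_eqF // mul1e.
Qed.

Lemma mu_I01 : mu I01 = 1%E.
Proof. by rewrite /I01 lebesgue_measure_itv /= lte_fin ltr01 -EFinB subr0. Qed.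

Lemma fin_sub (F : set R) : measurable F -> F `<=` I01 -> exists a : R, mu F = a%:E.
Proof.
move=> mF FI; exists (fine (mu F)); rewrite fineK // ge0_fin_numE //.
apply: (le_lt_trans (y := mu I01)); last by rewrite mu_I01 ltry.
by apply: le_measure => //; rewrite inE //; exact: I01_meas.
Qed.

Lemma I01_split (t : R) : 0 <= t <= 1 ->
  (I01 : set R) = `[0, t[%classic `|` `[t, 1[%classic.
Proof.
move=> /andP[t0 t1].
by apply/seteqP; split => x /=; rewrite /I01 /= !in_itv /=; [move=> /andP[u v]|case=> /andP[u v]];
    [case: (ltrP x t) => w; [left|right]|..]; apply/andP; split; lra.
Qed.

Lemma part_set (N t : R) (j : nat) (A : set R) : 0 < N -> 0 <= t < 1 -> N = j%:R + t ->
  `[j%:R / N, 1[%classic `&` Tmap N @^-1` A =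
  (fun x : R => N * x - j%:R) @^-1` (`[0, t[%classic `&` A).
Proof.
move=> N0 /andP[t0 t1] hN; apply/seteqP; split => x /=.
- rewrite in_itv /= ler_pdivrMr // => -[/andP[u v] hA].
  have v' : N * x < N * 1 by rewrite ltr_pM2l.
  have hb : j%:R <= N * x < j%:R + 1 by apply/andP; split; lra.
  rewrite (Tmap_branch N0 hb) in hA; split => //.
  rewrite in_itv /=; apply/andP; split; lra.
- rewrite !in_itv /= ler_pdivrMr // => -[/andP[u v] hA].
  have hb : j%:R <= N * x < j%:R + 1 by apply/andP; split; lra.
  rewrite (Tmap_branch N0 hb); split => //.
  have v' : N * x < N * 1 by lra.
  rewrite ltr_pM2l // in v'.
  by apply/andP; split; lra.
Qed.
End S.
Theorem proposition2p1 (R : realType) (p q m r k : nat) :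
  (1 < q)%N -> (q < p)%N -> coprime p q ->
  p = (m * q + r)%N -> (1 <= r)%N -> (r <= q - 1)%N ->
  (1 <= k)%N ->
  invariant_density
    (Tmap (p%:R / q%:R : R) \o Tmap ((k * q)%:R : R))
    (fun x : R => ((p - r)%:R / p%:R) *
        (1 + (q%:R / (p - r)%:R) * (\1_(`[0, r%:R / q%:R[%classic : set R) x))).
Proof.
move=> q1 qp _ pE r1 rq k1.
have m1 : (1 <= m)%N by case: m pE => [|m'] pE; lia.
have prE : (p - r)%N = (m * q)%N by lia.
set J := (`[0, r%:R / q%:R[%classic : set R).
set c := (p - r)%:R / p%:R : R.
have q0 : (0 : R) < q%:R by rewrite ltr0n; lia.
have p0 : (0 : R) < p%:R by rewrite ltr0n; lia.
have pr0 : (0 : R) < (p - r)%:R by rewrite ltr0n; lia.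
have c0 : 0 <= c by rewrite /c divr_ge0 // ltW.
have d0 : (0 : R) <= q%:R / p%:R by rewrite divr_ge0 // ltW.
have hf : (fun x : R => c * (1 + (q%:R / (p - r)%:R) * (\1_J x))) =
          (fun x => c + q%:R / p%:R * \1_J x).
  apply/funext => x; rewrite /c; field; rewrite !gt_eqF //.
rewrite hf.
have mJ : measurable J by exact: measurable_itv.
have rq1 : r%:R / q%:R < (1 : R) by rewrite ltr_pdivrMr // mul1r ltr_nat; lia.
have JI : J `<=` I01.
  by move=> x; rewrite /J /I01 /= !in_itv /= => /andP[a b]; apply/andP; split; lra.
have cE : c + q%:R / p%:R * (r%:R / q%:R) = 1.
  rewrite /c natrB; last by lia.
  by field; rewrite !gt_eqF.
split; [|split; [|split]].
- apply: measurable_realfun.measurable_funD; first exact: measurable_cst.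
  apply: measurable_realfun.measurable_funM; first exact: measurable_cst.
  exact: measurable_realfun.measurable_indic.
- by move=> x _; apply: addr_ge0 => //; apply: mulr_ge0.
- rewrite /= int_step //; last exact: I01_meas.
  rewrite mu_I01 setIidl // /J lebesgue_measure_itv /= lte_fin divr_gt0 ?ltr0n //; last by lia.
  by rewrite mule1 -EFinB subr0 -EFinM -EFinD cE.
move=> A mA AI.
set N1 := (k * q)%:R : R.
set N2 := p%:R / q%:R : R.
have N10 : 0 < N1 by rewrite /N1 ltr0n; lia.
have N20 : 0 < N2 by rewrite /N2 divr_gt0.
have [a ha] := fin_sub _ mA AI.
have mJA : measurable (J `&` A) by exact: measurableI.
have [b hb] := fin_sub _ mJA (subset_trans (@subIsetr _ J A) AI).
have mT2 : measurable (Tmap N2 @^-1` A).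
  by have := Tmap_meas N2 measurableT A mA; rewrite setTI.
set E := I01 `&` Tmap N2 @^-1` A.
have mE : measurable E by exact: measurableI I01_meas mT2.
have hAI : A `&` I01 = A by exact: setIidl.
have [mE1 hE1] : _ := count_mu N2 A a m N20 mA (ltac:(by rewrite hAI)).
have hN2 : N2 = m%:R + r%:R / q%:R.
  by rewrite /N2 pE natrD natrM; field; rewrite gt_eqF.
have mN2 : m%:R / N2 <= 1.
  rewrite ler_pdivrMr // mul1r hN2 lerDl; by rewrite divr_ge0 // ltW.
have mN20 : 0 <= m%:R / N2 by rewrite divr_ge0 // ltW.
have hpart : `[m%:R / N2, 1[%classic `&` Tmap N2 @^-1` A =
    (fun x : R => N2 * x - m%:R) @^-1` (J `&` A).
  by apply: part_set => //; rewrite rq1 andbT divr_ge0 // ltW.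
have hsplit : E = (`[0, m%:R / N2[%classic `&` Tmap N2 @^-1` A) `|`
                  (`[m%:R / N2, 1[%classic `&` Tmap N2 @^-1` A).
  rewrite -setIUl; congr (_ `&` _).
  by apply: I01_split; rewrite mN20 mN2.
have hpm : lebesgue_measure (`[m%:R / N2, 1[%classic `&` Tmap N2 @^-1` A) = (b / N2)%:E.
  by rewrite hpart; exact: scale_inv.
have mP : measurable (`[m%:R / N2, 1[%classic `&` Tmap N2 @^-1` A).
  by rewrite hpart; exact: pre_meas.
have he : lebesgue_measure E = (m%:R / N2 * a + b / N2)%:E.
  rewrite hsplit measureU //; last first.
    apply/seteqP; split => x //= [[u _] [v _]]; move: u v; rewrite !in_itv /=; lra.
  by rewrite EFinD -hE1 -hpm.
have hEI : E `&` I01 = E by apply: setIidl; exact: subIsetl.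
have kq1 : (k * q)%:R / N1 = 1 by rewrite -/N1 divff // gt_eqF.
have krq : (k * r)%:R / N1 = r%:R / q%:R.
  by rewrite /N1 !natrM; field; rewrite !gt_eqF // ltr0n; lia.
have hD : I01 `&` (Tmap N2 \o Tmap N1) @^-1` A =
    `[0, (k * q)%:R / N1[%classic `&` Tmap N1 @^-1` E.
  rewrite kq1 /E; apply/seteqP; split => x /=.
  - by move=> [h1 h2]; split => //; split => //; exact: Tmap_I01.
  - by move=> [h1 [h3 h2]].
have hJD : J `&` (`[0, (k * q)%:R / N1[%classic `&` Tmap N1 @^-1` E) =
    `[0, (k * r)%:R / N1[%classic `&` Tmap N1 @^-1` E.
  by rewrite kq1 krq setIA (setIidl JI).
have [mD hDmu] : _ := count_mu N1 E _ (k * q) N10 mE (ltac:(by rewrite hEI he)).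
have [_ hJDmu] : _ := count_mu N1 E _ (k * r) N10 mE (ltac:(by rewrite hEI he)).
rewrite /= hD int_step //.
rewrite hJD int_step //.
rewrite hDmu hJDmu ha hb -!EFinM -!EFinD; congr EFin.
rewrite kq1 krq mul1r.
set e := m%:R / N2 * a + b / N2.
have -> : c * e + q%:R / p%:R * (r%:R / q%:R * e) = (c + q%:R / p%:R * (r%:R / q%:R)) * e by ring.
rewrite cE mul1r /e /c /N2 prE natrM; field.
by rewrite !gt_eqF // ltr0n; lia.

Qed.
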